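(* Let $\mathbf{A}=(A,\mathcal{R})$ and $\mathbf{B}=(B,\mathcal{S})$ be $\mathbf{K}$-objects and $\mu:\Phi\mathbf{B}\to\Phi\mathbf{A}$ a natural transformation. Then there is a $\mathbf{K}$-morphism $f:\mathbf{A}\to\mathbf{B}$ with $\mu=\Phi f$; that is, $\Phi$ is full.
   Context: $\mathbf{T}$ is the category whose objects are pairs $(A,\mathcal{R})$ with $A$ a set and $\mathcal{R}$ a family of subsets of $A$, and whose morphisms $f:(A,\mathcal{R})\to(B,\mathcal{S})$ are maps $f:A\to B$ with $f^{-1}[S]\in\mathcal{R}$ for all $S\in\mathcal{S}$. Fix a simple graph with vertex set $V=\{v_1,\dots,v_6\}$ and edge set $\mathcal{G}$ (two-element subsets of $V$) with no non-identity automorphism. For a $\mathbf{T}$-object $(A,\mathcal{R})$ let $\Psi(A,\mathcal{R})=(\overline{A},\overline{\mathcal{R}})$ with $\overline{A}=A\sqcup V$ and $\overline{\mathcal{R}}$ consisting of $\{v_i\}$, $\overline{A}\setminus\{v_i\}$ ($i=1,\dots,6$), $G$, $\overline{A}\setminus G$ ($G\in\mathcal{G}$), and $\{v_1,v_2,v_3\}\cup R$, $\{v_4,v_5,v_6\}\cup(A\setminus R)$ ($R\in\mathcal{R}$). $\mathbf{K}$ is the full subcategory of $\mathbf{T}$ on the objects of the form $\Psi(A,\mathcal{R})$. For a $\mathbf{K}$-object $\mathbf{A}=(A,\mathcal{R})$ and a set $X$, let $\approx_{\mathbf{A}}$ be the equivalence on maps $A\to X$: $g_1\approx_{\mathbf{A}}g_2$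 iff $g_1=g_2$, or $g_1[A]=g_2[A]$ is a two-element set $\{x,x'\}$ and $g_1^{-1}[\{x\}]=g_2^{-1}[\{x'\}]\in\mathcal{R}$. The set functor $\Phi\mathbf{A}$ is $(\Phi\mathbf{A})X=\{g\,;\,g:A\to X\}/\!\approx_{\mathbf{A}}$, $((\Phi\mathbf{A})h)(g/\!\approx_{\mathbf{A}})=hg/\!\approx_{\mathbf{A}}$. For a $\mathbf{K}$-morphism $f:\mathbf{A}\to\mathbf{B}$, $\Phi f:\Phi\mathbf{B}\to\Phi\mathbf{A}$ is the natural transformation with $(\Phi f)_X(g/\!\approx_{\mathbf{B}})=gf/\!\approx_{\mathbf{A}}$ for $g:B\to X$. *)

(* Defs.v *)
From mathcomp Require Import all_boot all_fingroup.
From mathcomp Require Import boolp classical_sets.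
Set Implicit Arguments. Unset Strict Implicit. Unset Printing Implicit Defensive.
Local Open Scope classical_set_scope.

(* The vertex set V = {v_1,...,v_6} is 'I_6, with v_i represented by i-1. *)

Definition is_Tmorph (A B : Type) (R : set (set A)) (S : set (set B)) (f : A -> B) : Prop :=
  forall U, S U -> R (f @^-1` U).

Definition simple_graph (G : set (set 'I_6)) : Prop :=
  forall E, G E -> exists x y : 'I_6, x <> y /\ E = [set x; y].

Definition graph_aut (G : set (set 'I_6)) (s : {perm 'I_6}) : Prop :=
  forall x y : 'I_6, G [set x; y] <-> G [set s x; s y].

Definition rigid (G : set (set 'I_6)) : Prop :=
  forall s : {perm 'I_6}, graph_aut G s -> s = 1%g.

Definition Psi_fam (G : set (set 'I_6)) (A : Type) (R : set (set A)) : set (set (A + 'I_6)) :=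
  fun U =>
    (exists i : 'I_6, U = [set inr i] \/ U = ~` [set inr i]) \/
    (exists E, G E /\ (U = inr @` E \/ U = ~` (inr @` E))) \/
    (exists Rr, R Rr /\
       (U = (inr @` [set i : 'I_6 | (i < 3)%N]) `|` (inl @` Rr) \/
        U = (inr @` [set i : 'I_6 | (3 <= i)%N]) `|` (inl @` (~` Rr)))).

Definition approx (C : Type) (RC : set (set C)) (X : Type) (g1 g2 : C -> X) : Prop :=
  g1 = g2 \/
  exists x x' : X, x <> x' /\
    range g1 = [set x; x'] /\ range g2 = [set x; x'] /\
    g1 @^-1` [set x] = g2 @^-1` [set x'] /\
    RC (g1 @^-1` [set x]).

(* A natural transformation Phi(C1,RC1) -> Phi(C2,RC2), presented on
   representatives: mu X sends a map C1 -> X to a map C2 -> X, compatibly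
   with the quotients, and naturally in X up to \approx. *)
Definition is_nat_trans (C1 : Type) (RC1 : set (set C1)) (C2 : Type) (RC2 : set (set C2))
  (mu : forall X : Type, (C1 -> X) -> (C2 -> X)) : Prop :=
  (forall (X : Type) (g1 g2 : C1 -> X), approx RC1 g1 g2 -> approx RC2 (mu X g1) (mu X g2)) /\
  (forall (X Y : Type) (h : X -> Y) (g : C1 -> X),
      approx RC2 (mu Y (h \o g)) (h \o mu X g)).

(* Main.v *)
Require Import Defs.
From mathcomp Require Import all_boot all_fingroup.
From mathcomp Require Import boolp classical_sets.
Local Open Scope classical_set_scope.
Set Implicit Arguments. Unset Strict Implicit.

Definition good (C : Type) (RC : set (set C)) (h : C -> bool) : Prop :=
  RC [set c | h c].

Lemma approx_bool (C : Type) (RC : set (set C)) (h k : C -> bool) :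
  (forall P, RC P -> RC (~` P)) ->
  approx RC h k ->
  (forall c, k c = h c) \/ ((forall c, k c = ~~ h c) /\ good RC h).
Proof.
move=> HC [->|[x [x' [Hxx' [_ [_ [Heq HR]]]]]]]; first by left.
right.
have Hx' : x' = ~~ x.
  by move: Hxx'; clear; case: x; case: x'.
subst x'.
split.
  move=> c.
  have Hc : (h @^-1` [set x]) c <-> (k @^-1` [set ~~ x]) c by rewrite Heq.
  clear Heq HR Hxx'; move: Hc; rewrite /preimage /=.
  case: (h c); case: (k c); case: x; move=> /= [H1 H2];
    first [done | by have := H1 erefl | by have := H2 erefl].
rewrite /good; case: x {Hxx' Heq} HR => HR; first exact HR.
have -> : [set c | h c] = ~` (h @^-1` [set false]).
  by apply/seteqP; split=> c /=; rewrite /preimage /=; case: (h c).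
exact: HC.
Qed.

Lemma good_ext (C : Type) (RC : set (set C)) (h k : C -> bool) :
  (forall c, k c = h c) -> good RC h -> good RC k.
Proof.
move=> E; rewrite /good.
have -> : [set c | k c] = [set c | h c].
  by apply/seteqP; split=> c /=; rewrite E.
done.
Qed.

Lemma good_neg (C : Type) (RC : set (set C)) (h k : C -> bool) :
  (forall P, RC P -> RC (~` P)) ->
  (forall c, k c = ~~ h c) -> good RC h -> good RC k.
Proof.
move=> HC E; rewrite /good => H.
have -> : [set c | k c] = ~` [set c | h c].
  by apply/seteqP; split=> c /=; rewrite E; case: (h c).
exact: HC.
Qed.

Lemma Psi_compl (G : set (set 'I_6)) (A : Type) (R : set (set A)) (P : set (A + 'I_6)) :
  Psi_fam G R P -> Psi_fam G R (~` P).
Proof.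
case=> [[i [->|->]]|[[E [HE [->|->]]]|[Rr [HR [->|->]]]]].
- by left; exists i; right.
- by left; exists i; left; rewrite setCK.
- by right; left; exists E; split => //; right.
- by right; left; exists E; split => //; left; rewrite setCK.
- right; right; exists Rr; split => //; right.
  apply/seteqP; split=> [[a|i]|[a|i]] /=.
  + move=> H; right; exists a => //; move=> Ha; apply: H; right; by exists a.
  + move=> H; left; exists i => //; rewrite leqNgt; apply/negP => Hi.
    by apply: H; left; exists i.
  + case=> [[j _ //]|[b Hb [<-]]] [[j _ //]|[b' Hb' [Eb]]].
    by subst b'.
  + case=> [[j Hj [<-]]|[b _ //]] [[j' Hj' [Ej]]|[b _ //]].
    by subst j'; move: Hj Hj' => /=; case: (ltnP j 3).
- right; right; exists Rr; split => //; left.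
  apply/seteqP; split=> [[a|i]|[a|i]] /=.
  + move=> H; right; exists a => //; apply: contrapT => Ha; apply: H; right; by exists a.
  + move=> H; left; exists i => //; rewrite ltnNge; apply/negP => Hi.
    by apply: H; left; exists i.
  + case=> [[j _ //]|[b Hb [<-]]] [[j _ //]|[b' Hb' [Eb]]].
    by subst b'.
  + case=> [[j Hj [<-]]|[b _ //]] [[j' Hj' [Ej]]|[b _ //]].
    by subst j'; move: Hj Hj' => /=; case: (ltnP j 3).
Qed.

Lemma third_vertex (x y : 'I_6) : exists z : 'I_6, (z != x) && (z != y).
Proof.
case: x => [[|[|[|[|[|[|x]]]]]] Hx] //; case: y => [[|[|[|[|[|[|y]]]]]] Hy] //;
  first [ by exists (@Ordinal 6 0 isT) | by exists (@Ordinal 6 1 isT)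
        | by exists (@Ordinal 6 2 isT)].
Qed.

Lemma Psi_proper (G : set (set 'I_6)) (HG : simple_graph G) (A : Type) (R : set (set A))
  (P : set (A + 'I_6)) :
  Psi_fam G R P -> (exists c, P c) /\ (exists c, ~ P c).
Proof.
case=> [[i [->|->]]|[[E [HE [->|->]]]|[Rr [HR [->|->]]]]].
- split; first by exists (inr i).
  by exists (inr (lift i ord0)) => /= -[] /eqP; rewrite eq_sym (negbTE (neq_lift _ _)).
- split; last by exists (inr i) => /=; apply.
  by exists (inr (lift i ord0)) => /= -[] /eqP; rewrite eq_sym (negbTE (neq_lift _ _)).
- have [x [y [_ ->]]] := HG E HE.
  split; first by exists (inr x); exists x => //; left.
  have [z /andP [zx zy]] := third_vertex x y.
  exists (inr z) => -[w [->|->] [Ew]]; by rewrite Ew eqxx in zx zy.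
- have [x [y [_ ->]]] := HG E HE.
  split; last by exists (inr x) => /=; apply; exists x => //; left.
  have [z /andP [zx zy]] := third_vertex x y.
  exists (inr z) => -[w [->|->] [Ew]]; by rewrite Ew eqxx in zx zy.
- split; first by exists (inr ord0); left; exists ord0.
  by exists (inr ord_max) => [[[j Hj [Ej]]|[b _ //]]]; subst j.
- split; first by exists (inr ord_max); left; exists ord_max.
  by exists (inr ord0) => [[[j Hj [Ej]]|[b _ //]]]; subst j.
Qed.

Unset Implicit Arguments.

Theorem lemma3p6 (G : set (set 'I_6)) (HG : simple_graph G) (Hrig : rigid G)
  (A : Type) (R : set (set A)) (B : Type) (S : set (set B))
  (mu : forall X : Type, (B + 'I_6 -> X) -> (A + 'I_6 -> X))
  (Hmu : is_nat_trans (Psi_fam G S) (Psi_fam G R) mu) :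
  exists f : A + 'I_6 -> B + 'I_6,
    is_Tmorph (Psi_fam G R) (Psi_fam G S) f /\
    forall (X : Type) (g : B + 'I_6 -> X),
      approx (Psi_fam G R) (mu X g) (g \o f).
Proof.
case: Hmu => H1 H2.
exists (mu _ id); split; last first.
  by move=> X g; exact: (H2 _ X g id).
move=> U HU.
set f := mu _ id.
pose g1 := fun y : B + 'I_6 => `[< U y >].
pose g2 := fun y : B + 'I_6 => ~~ `[< U y >].
have HC := @Psi_compl G A R.
have Hg12 : approx (Psi_fam G S) g1 g2.
  right; exists true, false; split => //.
  have [[y1 Hy1] [y2 Hy2]] := Psi_proper HG HU.
  have Rg : forall g : B + 'I_6 -> bool, (exists y, g y = true) -> (exists y, g y = false) ->
      range g = [set true; false].
    move=> g [a Ha] [b Hb]; apply/seteqP; split=> z.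
      by case: z => _; [left|right].
    by case=> ->; [exists a | exists b].
  split; first by apply: Rg; [exists y1 | exists y2]; rewrite /g1 ?(asboolT Hy1) ?(asboolF Hy2).
  split; first by apply: Rg; [exists y2 | exists y1]; rewrite /g2 ?(asboolT Hy1) ?(asboolF Hy2).
  have E : g1 @^-1` [set true] = g2 @^-1` [set false].
    by apply/seteqP; split=> y /=; rewrite /preimage /g1 /g2 /=; case: asboolP.
  split; first exact E.
  have -> : g1 @^-1` [set true] = U.
    by apply/seteqP; split=> y /=; rewrite /preimage /g1 /=; case: asboolP.
  exact HU.
pose p := g1 \o f.
pose q := g2 \o f.
pose m1 := mu _ g1.
pose m2 := mu _ g2.
have Hq : forall c, q c = ~~ p c by [].
have S1 : (forall c, p c = m1 c) \/ ((forall c, p c = ~~ m1 c) /\ good (Psi_fam G R) m1)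
  := approx_bool HC (H2 _ _ g1 id).
have S2 : (forall c, m2 c = m1 c) \/ ((forall c, m2 c = ~~ m1 c) /\ good (Psi_fam G R) m1)
  := approx_bool HC (H1 _ _ _ Hg12).
have S3 : (forall c, q c = m2 c) \/ ((forall c, q c = ~~ m2 c) /\ good (Psi_fam G R) m2)
  := approx_bool HC (H2 _ _ g2 id).
suff : good (Psi_fam G R) p.
  rewrite /good.
  have -> : [set c | p c] = f @^-1` U.
    by apply/seteqP; split=> c /=; rewrite /p /g1 /preimage /=; case: asboolP.
  done.
pose c0 : A + 'I_6 := inr ord0.
case: S1 => [E1|[E1 G1]]; case: S2 => [E2|[E2 G2]]; case: S3 => [E3|[E3 G3]].
- exfalso; have := Hq c0; rewrite E3 E2 -E1; by case: (p c0).
- by apply: good_ext G3 => c; rewrite E1 E2.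
- by apply: good_ext G2 => c; rewrite E1.
- exfalso; have := Hq c0; rewrite E3 E2 -E1 negbK; by case: (p c0).
- by apply: good_neg HC _ G1 => c; rewrite E1.
- by apply: good_neg HC _ G3 => c; rewrite E1 E2.
- by apply: good_neg HC _ G1 => c; rewrite E1.
- by apply: good_neg HC _ G1 => c; rewrite E1.
Qed.
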